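(* Let $p$ be a prime, $\Phi:\mathbb{N}\to\mathbb{N}$ strictly increasing, and $f\in\mathcal{F}(\Phi)$. Let $n_0,u\in\mathbb{N}$ with $u<p^{1+\Phi(n_0)}$, and let $\Lambda:=\{u'\in\mathbb{Z}_p: u'\equiv u\pmod{p^{1+\Phi(n_0)}}\}$. Assume $f$ is uniformly approximable on $\Lambda$ with respect to $\Phi$, with constants $h(\Lambda)$, $l(\Lambda)$, and assume that $n_0+1\ge l(\Lambda)$, that $f(u)\equiv 0\pmod{p^{h(\Lambda)+n_0+1}}$, and that $|(\delta_nf)(u')|_p=1$ for all $n\ge n_0$ and all $u'\in\Lambda$. Then there exists a unique $\xi\in\mathbb{Z}_p$ such that $f(\xi)=0$, $\xi\equiv u\pmod{p^{1+\Phi(n_0)}}$, and $\rho(\xi;n+1)\in\{0,1,\dots,p-1\}$ for every $n\ge n_0$.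
   Context: $\mathbb{N}=\{0,1,2,\dots\}$. $|\cdot|_p$ is the $p$-adic absolute value with $|p|_p=p^{-1}$. Each $x\in\mathbb{Z}_p$ is written $x=\sum_{i\ge0}x_ip^i$ with digits $x_i\in\{0,\dots,p-1\}$. Set $\Phi(-1):=-1$. $\mathcal{F}(\Phi)$ is the class of continuous $f:\mathbb{Z}_p\to\mathbb{Z}_p$ such that for every positive integer $n$ and all $x,y\in\mathbb{Z}_p$: if $|x-y|_p\le p^{-1-\Phi(n-1)}$ then $|f(x)-f(y)|_p\le p^{-n}$. For $x\in\mathbb{Z}_p$ and $j\in\mathbb{N}$, $\rho(x;j):=p^{-1-\Phi(j-1)}\sum_{i=1+\Phi(j-1)}^{\Phi(j)}x_ip^i$. A function $f:\mathbb{Z}_p\to\mathbb{Z}_p$ is approximable at $u\in\mathbb{Z}_p$ with respect to $\Phi$ if there exist nonnegative integers $h=h(u)$, $l=l(u)$ and $p$-adic numbers $(\delta_nf)(u)$ ($n\ge l$) such that for every integer $n\ge l$ and every $u'\in\mathbb{Z}_p$, $f(u+p^{1+\Phi(n-1)}u')\equiv f(u)+p^{h+n}u'\,(\delta_nf)(u)\pmod{p^{h+n+1}}$ (i.e. the difference of the two sides has $p$-adic valuation at least $h+n+1$). $f$ is uniformly approximable on $\Lambda\subset\mathbb{Z}_p$ with respect to $\Phi$ if it is approximable at every $u\in\Lambda$ with respect to $\Phi$ and $h(u)$, $l(u)$ can be chosen constant on $\Lambda$; these constants are denoted $h(\Lambda)$, $l(\Lambda)$. *)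

(* Defs.v *)
(* p-adic integers Z_p modelled as coherent sequences of
   residues: x is represented by (x mod p^n)_n, with x_n = x_{n+1} mod p^n. *)
From mathcomp Require Import all_boot.
Set Implicit Arguments. Unset Strict Implicit. Unset Printing Implicit Defensive.

Record Zp (p : nat) := MkZp {
  zres : nat -> nat;
  zres_coh : forall n, zres n = zres n.+1 %% p ^ n }.

Lemma expn_dvdS (p n : nat) : p ^ n %| p ^ n.+1.
Proof. by rewrite expnS dvdn_mull. Qed.

Definition zofnat_res (p u : nat) (n : nat) := u %% p ^ n.
Lemma zofnat_coh p u n : zofnat_res p u n = zofnat_res p u n.+1 %% p ^ n.
Proof. by rewrite /zofnat_res modn_dvdm // expn_dvdS. Qed.
Definition zofnat (p u : nat) : Zp p := MkZp (@zofnat_coh p u).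

Definition zadd_res p (x y : Zp p) n := (zres x n + zres y n) %% p ^ n.
Lemma zadd_coh p (x y : Zp p) n : zadd_res x y n = zadd_res x y n.+1 %% p ^ n.
Proof.
rewrite /zadd_res modn_dvdm ?expn_dvdS // (zres_coh x n) (zres_coh y n).
by rewrite modnDm.
Qed.
Definition zadd p (x y : Zp p) : Zp p := MkZp (@zadd_coh p x y).

Definition zmul_res p (x y : Zp p) n := (zres x n * zres y n) %% p ^ n.
Lemma zmul_coh p (x y : Zp p) n : zmul_res x y n = zmul_res x y n.+1 %% p ^ n.
Proof.
rewrite /zmul_res modn_dvdm ?expn_dvdS // (zres_coh x n) (zres_coh y n).
by rewrite modnMm.
Qed.
Definition zmul p (x y : Zp p) : Zp p := MkZp (@zmul_coh p x y).

Definition zcong p (k : nat) (x y : Zp p) : Prop := zres x k = zres y k.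

(* |x|_p = 1, i.e. x is not divisible by p *)
Definition zunit p (x : Zp p) : Prop := zres x 1 <> 0.

Definition zdigit p (x : Zp p) (i : nat) : nat := (zres x i.+1 %/ p ^ i) %% p.

(* 1 + Phi(j-1), with the convention Phi(-1) = -1 *)
Definition onePhiPrev (Phi : nat -> nat) (j : nat) : nat :=
  if j is j'.+1 then (Phi j').+1 else 0.

(* rho(x; j) = p^{-1-Phi(j-1)} * sum_{i = 1+Phi(j-1)}^{Phi(j)} x_i p^i *)
Definition rho p (Phi : nat -> nat) (x : Zp p) (j : nat) : nat :=
  \sum_(onePhiPrev Phi j <= i < (Phi j).+1) zdigit x i * p ^ (i - onePhiPrev Phi j).

Definition zcontinuous p (f : Zp p -> Zp p) : Prop :=
  forall (x : Zp p) (k : nat), exists m : nat,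
    forall y : Zp p, zcong m x y -> zcong k (f x) (f y).

Definition classF p (Phi : nat -> nat) (f : Zp p -> Zp p) : Prop :=
  zcontinuous f /\
  forall (n : nat) (x y : Zp p), 0 < n ->
    zcong (onePhiPrev Phi n) x y -> zcong n (f x) (f y).

(* f approximable at u w.r.t. Phi with given h, l and (delta_n f)(u) = delta n *)
Definition approx_at_with p (Phi : nat -> nat) (f : Zp p -> Zp p) (u : Zp p)
    (h l : nat) (delta : nat -> Zp p) : Prop :=
  forall (n : nat) (u' : Zp p), l <= n ->
    zcong (h + n).+1
      (f (zadd u (zmul (zofnat p (p ^ onePhiPrev Phi n)) u')))
      (zadd (f u) (zmul (zofnat p (p ^ (h + n))) (zmul u' (delta n)))).

Definition unif_approx_with p (Phi : nat -> nat) (f : Zp p -> Zp p)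
    (Lambda : Zp p -> Prop) (h l : nat) (delta : Zp p -> nat -> Zp p) : Prop :=
  forall u : Zp p, Lambda u -> approx_at_with Phi f u h l (delta u).

(* Main.v *)
Require Import Defs.
From mathcomp Require Import all_boot.
From Stdlib Require Import FunctionalExtensionality ProofIrrelevance.
Set Implicit Arguments. Unset Strict Implicit. Unset Printing Implicit Defensive.

Lemma zext p (x y : Zp p) : (forall n, zres x n = zres y n) -> x = y.
Proof.
case: x => zx cx; case: y => zy cy /= H.
have E : zx = zy by apply: functional_extensionality.
subst zy; f_equal; apply: proof_irrelevance.
Qed.

Lemma zres_mod p (x : Zp p) k m : k <= m -> zres x k = zres x m %% p ^ k.
Proof.
move=> hkm; rewrite -(subnKC hkm); elim: (m - k) => [|d IH].
  by rewrite addn0 (zres_coh x k) modn_mod.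
rewrite addnS IH (zres_coh x (k + d)) modn_dvdm // dvdn_exp2l // leq_addr //.
Qed.

Lemma zofnatE p a k : zres (zofnat p a) k = a %% p ^ k.
Proof. by []. Qed.

Lemma zaddE p (x y : Zp p) k : zres (zadd x y) k = (zres x k + zres y k) %% p ^ k.
Proof. by []. Qed.
Lemma zmulE p (x y : Zp p) k : zres (zmul x y) k = (zres x k * zres y k) %% p ^ k.
Proof. by []. Qed.

Lemma zofnat_add p X N c :
  zadd (zofnat p X) (zmul (zofnat p N) (zofnat p c)) = zofnat p (X + N * c).
Proof.
apply: zext => k; rewrite zaddE zmulE !zofnatE.
by rewrite modnMm modnDm.
Qed.

Lemma step_arith p K A D c : 0 < p -> A %% p ^ K = 0 ->
  ((A + p ^ K * c * D) %% p ^ K.+1 == 0) = (p %| A %/ p ^ K + c * D).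
Proof.
move=> p0 hA.
have -> : A + p ^ K * c * D = p ^ K * (A %/ p ^ K + c * D).
  rewrite mulnDr -mulnA [p ^ K * _]mulnC {1}(divn_eq A (p ^ K)) hA addn0.
  by congr (_ + _); apply: mulnC.
change ((p ^ K.+1 %| p ^ K * (A %/ p ^ K + c * D)) = (p %| A %/ p ^ K + c * D)).
by rewrite expnSr dvdn_pmul2l // expn_gt0 p0.
Qed.

Lemma L1 p (x Z : Zp p) K :
  zcong K (zadd x (zmul (zofnat p (p ^ K)) Z)) x.
Proof.
rewrite /zcong zaddE zmulE zofnatE modnn mul0n mod0n addn0.
by rewrite -zres_mod.
Qed.

Lemma zcong_le p k m (x y : Zp p) : k <= m -> zcong m x y -> zcong k x y.
Proof. by move=> hkm; rewrite /zcong (zres_mod x hkm) (zres_mod y hkm) => ->. Qed.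

Lemma exists_c p a D : prime p -> ~~ (p %| D) -> exists c, c < p /\ p %| a + c * D.
Proof.
move=> pp hD.
have p0 : 0 < p := prime_gt0 pp.
have [e he hdiv] := Bezoutl D p0.
move: hdiv; rewrite gcdnC.
have -> : gcdn D p = 1.
  by apply/eqP; change (coprime D p); rewrite coprime_sym prime_coprime.
move=> hdiv.
exists ((a * e) %% p); split; first by rewrite ltn_mod.
have : p %| a * (1 + e * D) by apply: dvdn_mull.
have E : (a + a * e %% p * D) %% p = (a + a * e * D) %% p.
  by rewrite -modnDmr modnMml modnDmr.
by rewrite /dvdn E mulnDr muln1 mulnA.
Qed.

Lemma uniq_c p a D c c' : prime p -> ~~ (p %| D) -> c < p -> c' < p ->
  p %| a + c * D -> p %| a + c' * D -> c = c'.
Proof.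
move=> pp hD hc hc' h1 h2.
wlog le : c c' hc hc' h1 h2 / c <= c'.
  move=> W; case: (leqP c c') => h; first exact: W.
  by apply/esym/W => //; apply: ltnW.
have : p %| (c' - c) * D.
  have := dvdn_sub h2 h1.
  by rewrite subnDl mulnBl.
rewrite Euclid_dvdM // (negbTE hD) orbF.
case E: (c' - c) => [|d].
  by move=> _; apply/eqP; rewrite eqn_leq le /= -subn_eq0 E.
move=> /(dvdn_leq (ltn0Sn d)) hp.
have : c' - c < p by apply: leq_ltn_trans (leq_subr _ _) hc'.
by rewrite E ltnNge hp => /negP.
Qed.

Lemma digit1 p (y : Zp p) b : 0 < p ->
  zres y b.+1 = zres y b + p ^ b * zdigit y b.
Proof.
move=> p0; rewrite /zdigit.
have hlt : zres y b.+1 < p ^ b * p.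
  by rewrite -expnSr zres_coh ltn_mod expn_gt0 p0.
rewrite modn_small; last by rewrite ltn_divLR ?expn_gt0 ?p0 // mulnC.
rewrite {1}(divn_eq (zres y b.+1) (p ^ b)) -(zres_mod y (leqnSn b)).
by rewrite addnC mulnC.
Qed.

Lemma digits p (y : Zp p) a b : 0 < p -> a <= b ->
  zres y b = zres y a + p ^ a * \sum_(a <= i < b) zdigit y i * p ^ (i - a).
Proof.
move=> p0 hab; rewrite -(subnKC hab); elim: (b - a) => [|d IH].
  by rewrite addn0 big_geq // muln0 addn0.
rewrite addnS digit1 // IH big_nat_recr /= ?leq_addr //.
rewrite mulnDr addnA; congr (_ + _).
by rewrite addKn mulnCA -expnD mulnC.
Qed.

Lemma shift p (y : Zp p) M : 0 < p ->
  exists s : Zp p, zadd (zofnat p (zres y M)) (zmul (zofnat p (p ^ M)) s) = y.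
Proof.
move=> p0.
have coh : forall k, zres y (k + M) %/ p ^ M = (zres y (k.+1 + M) %/ p ^ M) %% p ^ k.
  move=> k.
  rewrite (zres_mod y (leqnSn (k + M))) -addSn divn_modl; last first.
    by rewrite expnD dvdn_mull.
  by rewrite expnD mulnK // expn_gt0 p0.
exists (MkZp coh); apply: zext => k.
rewrite zaddE zmulE !zofnatE /= modnMml modnDm.
rewrite (zres_mod y (leq_addl k M)) [p ^ M * _]mulnC addnC -divn_eq.
by rewrite -zres_mod // leq_addr.
Qed.

Definition Qb p (Phi : nat -> nat) (f : Zp p -> Zp p) h n X c : bool :=
  zres (f (zofnat p (X + p ^ (Phi n).+1 * c))) (h + n).+2 == 0.

Definition cc p (Phi : nat -> nat) (f : Zp p -> Zp p) h n X : nat :=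
  if [pick c : 'I_p | Qb Phi f h n X c] is Some c then nat_of_ord c else 0.

Lemma cc_spec p Phi (f : Zp p -> Zp p) h n X :
  (exists c, c < p /\ Qb Phi f h n X c) ->
  cc Phi f h n X < p /\ Qb Phi f h n X (cc Phi f h n X).
Proof.
move=> [c [hc hq]]; rewrite /cc; case: pickP => [c' Hc' | Hn]; first by split.
by move: (Hn (Ordinal hc)); rewrite /= hq.
Qed.

Lemma step p Phi (f : Zp p -> Zp p) h l (dl : nat -> Zp p) X n c : 0 < p ->
  approx_at_with Phi f (zofnat p X) h l dl -> l <= n.+1 ->
  zres (f (zofnat p X)) (h + n).+1 = 0 ->
  Qb Phi f h n X c = (p %| zres (f (zofnat p X)) (h + n).+2 %/ p ^ (h + n).+1
                          + c * zres (dl n.+1) (h + n).+2).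
Proof.
move=> p0 Happ hl h0.
have := Happ n.+1 (zofnat p c) hl.
have E : onePhiPrev Phi n.+1 = (Phi n).+1 by [].
rewrite E zofnat_add /zcong addnS /Qb => ->.
rewrite zaddE !zmulE !zofnatE !modnMml modnMmr modnDmr mulnA.
by rewrite step_arith // -zres_mod.
Qed.

Fixpoint Xs p (Phi : nat -> nat) (f : Zp p -> Zp p) h n0 u k : nat :=
  if k is k'.+1 then
    Xs Phi f h n0 u k' + p ^ (Phi (n0 + k')).+1 * cc Phi f h (n0 + k') (Xs Phi f h n0 u k')
  else u.

Theorem corollary1 (p : nat) (Phi : nat -> nat) (f : Zp p -> Zp p)
    (n0 u : nat) (h l : nat) (delta : Zp p -> nat -> Zp p) :
  prime p ->
  (forall m n : nat, m < n -> Phi m < Phi n) ->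
  classF Phi f ->
  u < p ^ (Phi n0).+1 ->
  unif_approx_with Phi f
    (fun u' : Zp p => zcong (Phi n0).+1 u' (zofnat p u)) h l delta ->
  l <= n0.+1 ->
  zcong (h + n0).+1 (f (zofnat p u)) (zofnat p 0) ->
  (forall (n : nat) (u' : Zp p), n0 <= n ->
     zcong (Phi n0).+1 u' (zofnat p u) -> zunit (delta u' n)) ->
  exists! xi : Zp p,
    f xi = zofnat p 0 /\
    zcong (Phi n0).+1 xi (zofnat p u) /\
    (forall n : nat, n0 <= n -> rho Phi xi n.+1 < p).
Proof.
move=> pp Hinc [Hcont HF] hu Hunif hl Hf0 Hunit.
have p0 : 0 < p := prime_gt0 pp.
pose X := Xs Phi f h n0 u.
have XS : forall k, X k.+1 = X k + p ^ (Phi (n0 + k)).+1 * cc Phi f h (n0 + k) (X k) by [].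
have X0 : X 0 = u by [].
have Pmono : forall m n, m <= n -> Phi m <= Phi n.
  move=> m n; rewrite leq_eqVlt => /orP [/eqP -> // | /Hinc /ltnW //].
have Pge : forall n, n <= Phi n.
  elim => [//|n IH]; exact: leq_ltn_trans IH (Hinc _ _ (ltnSn n)).
have HL : forall W, W %% p ^ (Phi n0).+1 = u ->
    zcong (Phi n0).+1 (zofnat p W) (zofnat p u).
  by move=> W hW; rewrite /zcong !zofnatE hW modn_small.
have modD : forall Y a b c, a <= b -> (Y + p ^ b * c) %% p ^ a = Y %% p ^ a.
  move=> Y a b c hab.
  have /dvdnP [q ->] : p ^ a %| p ^ b * c by apply: dvdn_mulr; apply: dvdn_exp2l.
  by rewrite addnC modnMDl.
have CCk : forall k, X k %% p ^ (Phi n0).+1 = u ->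
    zres (f (zofnat p (X k))) (h + (n0 + k)).+1 = 0 ->
    (cc Phi f h (n0 + k) (X k) < p /\
       Qb Phi f h (n0 + k) (X k) (cc Phi f h (n0 + k) (X k))) /\
    (forall c, c < p -> Qb Phi f h (n0 + k) (X k) c -> c = cc Phi f h (n0 + k) (X k)).
  move=> k I1 I3.
  have Hv := HL _ I1.
  have Happ := Hunif _ Hv.
  have hln : l <= (n0 + k).+1 by apply: leq_trans hl _; rewrite ltnS leq_addr.
  have hD : ~~ (p %| zres (delta (zofnat p (X k)) (n0 + k).+1) (h + (n0 + k)).+2).
    have := Hunit (n0 + k).+1 _ (leq_trans (leq_addr k n0) (leqnSn _)) Hv.
    have E1 := zres_mod (delta (zofnat p (X k)) (n0 + k).+1) (isT : 1 <= (h + (n0 + k)).+2).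
    rewrite expn1 in E1.
    by rewrite /zunit /dvdn E1 => H; apply/eqP.
  have hc : exists c, c < p /\ Qb Phi f h (n0 + k) (X k) c.
    have [c [hc hdc]] :=
      exists_c (zres (f (zofnat p (X k))) (h + (n0 + k)).+2 %/ p ^ (h + (n0 + k)).+1) pp hD.
    by exists c; split => //; rewrite (step c p0 Happ hln I3).
  have [ccp ccq] := cc_spec hc.
  split; first by split.
  move=> c hc' hq.
  move: hq ccq; rewrite !(step _ p0 Happ hln I3) => hq ccq.
  exact: uniq_c pp hD hc' ccp hq ccq.
have Inv : forall k, [/\ X k %% p ^ (Phi n0).+1 = u,
    X k < p ^ (Phi (n0 + k)).+1 &
    zres (f (zofnat p (X k))) (h + (n0 + k)).+1 = 0].
  elim => [|k [I1 I2 I3]].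
    rewrite addn0 X0 modn_small //; split => //.
    by move: Hf0; rewrite /zcong zofnatE mod0n.
  have [[ccp ccq] _] := CCk k I1 I3.
  split.
  - rewrite XS modD //; rewrite ltnS; apply: Pmono; exact: leq_addr.
  - rewrite XS addnS.
    apply: (@leq_trans (p ^ (Phi (n0 + k)).+1 * (cc Phi f h (n0 + k) (X k)).+1)).
      by rewrite mulnS ltn_add2r.
    apply: (@leq_trans (p ^ (Phi (n0 + k)).+2)).
      by rewrite [p ^ (Phi _).+2]expnS [p * _]mulnC leq_mul2l ccp orbT.
    by rewrite leq_exp2l ?prime_gt1 // ltnS; apply: Hinc.
  - rewrite XS addnS addnS; move: ccq; rewrite /Qb; exact: eqP.
have Xcong : forall k d, X (k + d) %% p ^ (Phi (n0 + k)).+1 = X k.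
  move=> k; elim => [|d IH]; first by rewrite addn0 modn_small //; case: (Inv k).
  rewrite addnS XS modD // ltnS; apply: Pmono; rewrite leq_add2l; exact: leq_addr.
have hjN : forall j, j <= (Phi (n0 + j)).+1.
  move=> j; apply: leq_trans (leq_addl n0 j) _; apply: leq_trans (Pge _) _; exact: leqnSn.
have coh : forall j, X j %% p ^ j = X j.+1 %% p ^ j.+1 %% p ^ j.
  move=> j; rewrite modn_dvdm; last by apply: dvdn_exp2l.
  by rewrite XS modD.
pose xi : Zp p := @MkZp p (fun j => X j %% p ^ j) coh.
have HxiN : forall k, zres xi (Phi (n0 + k)).+1 = X k.
  move=> k; have hk : k <= (Phi (n0 + k)).+1.
    apply: leq_trans (leq_addl n0 k) _; apply: leq_trans (Pge _) _; exact: leqnSn.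
  have := Xcong k ((Phi (n0 + k)).+1 - k); rewrite subnKC //.
have Hdig : forall (y : Zp p) n,
    zres y (Phi n.+1).+1 = zres y (Phi n).+1 + p ^ (Phi n).+1 * rho Phi y n.+1.
  move=> y n; rewrite /rho.
  have E : onePhiPrev Phi n.+1 = (Phi n).+1 by [].
  rewrite E; apply: digits => //; rewrite ltnS; apply: ltnW; exact: Hinc.
exists xi; split.
  split; [|split].
  { apply: zext => j; rewrite zofnatE mod0n.
    rewrite (zres_mod (f xi) (leq_trans (leq_addl n0 j) (leqnSn _))).
    have Hc : zcong (onePhiPrev Phi (n0 + j).+1) xi (zofnat p (X j)).
      change (zres xi (Phi (n0 + j)).+1 = zres (zofnat p (X j)) (Phi (n0 + j)).+1).
      by rewrite HxiN zofnatE modn_small //; case: (Inv j).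
    have := HF _ _ _ (ltn0Sn _) Hc; rewrite /zcong => ->.
    rewrite (zres_mod (f (zofnat p (X j))) (leq_addl h (n0 + j) : (n0 + j).+1 <= (h + (n0 + j)).+1)).
    by case: (Inv j) => _ _ ->; rewrite !mod0n. }
  { rewrite /zcong zofnatE modn_small //.
    by have := HxiN 0; rewrite addn0. }
  { move=> n hn; rewrite -(subnKC hn); set k := n - n0.
    have E := Hdig xi (n0 + k).
    have E2 := HxiN k.+1; rewrite addnS in E2.
    rewrite E2 HxiN XS in E.
    move/addnI/eqP: E; rewrite eqn_pmul2l ?expn_gt0 ?p0 // => /eqP <-.
    by case: (Inv k) => I1 _ I3; have [[ccp _] _] := CCk k I1 I3. }
move=> y [Hy0 [HyL Hyd]].
have Hy : forall k, zres y (Phi (n0 + k)).+1 = X k.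
  elim => [|k IH].
    by rewrite addn0 HyL zofnatE modn_small.
  have E := Hdig y (n0 + k); rewrite IH in E.
  rewrite addnS E XS.
  case: (Inv k) => I1 _ I3; have [_ Hu] := CCk k I1 I3.
  congr (_ + _ * _); apply: Hu; first exact: Hyd _ (leq_addr k n0).
  set c' := rho Phi y (n0 + k).+1 in E *.
  set W := X k + p ^ (Phi (n0 + k)).+1 * c' in E *.
  have hWu : W %% p ^ (Phi n0).+1 = u.
    rewrite -E -zres_mod; first by rewrite HyL zofnatE modn_small.
    rewrite !ltnS; apply: Pmono; exact: leq_trans (leq_addr k n0) (leqnSn _).
  have Happ := Hunif _ (HL _ hWu).
  have [s hs] := shift y (Phi (n0 + k).+1).+1 p0.
  rewrite E in hs.
  have hl2 : l <= (n0 + k).+2.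
    apply: leq_trans hl _; rewrite ltnS; exact: leq_trans (leq_addr k n0) (leqnSn _).
  have := Happ (n0 + k).+2 s hl2.
  have E3 : onePhiPrev Phi (n0 + k).+2 = (Phi (n0 + k).+1).+1 by [].
  rewrite E3 hs Hy0 => H.
  have H2 := zcong_le (leqnSn _) H.
  have H3 := L1 (f (zofnat p W)) (zmul s (delta (zofnat p W) (n0 + k).+2)) (h + (n0 + k).+2).
  move: H2 H3; rewrite /zcong => <-; rewrite zofnatE mod0n => H3.
  rewrite /W !addnS in H3; by rewrite /Qb -H3.
apply: zext => j.
by rewrite (zres_mod xi (hjN j)) (zres_mod y (hjN j)) HxiN Hy.
Qed.
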